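(* Let $G=(V,E)$ be an undirected unweighted graph with $n$ vertices, let $k\ge 1$ be an integer, and let $H=(V,E')$ with $E'\subseteq E$ be a $k$-spanner of $G$ whose girth is at least $k+2$. Then there exists a total ordering $\sigma$ of $E$ such that the greedy algorithm run on input $\langle G,k\rangle$ with edge ordering $\sigma$ outputs exactly $H$.
   Context: All graphs are undirected and unweighted. For a graph $G=(V,E)$ with $n$ vertices and an integer $k$, a $k$-spanner of $G$ is a subgraph $H=(V,E')$, $E'\subseteq E$, such that $\mathrm{dist}_H(u,v)\le k\cdot \mathrm{dist}_G(u,v)$ for all $(u,v)\in V\times V$. The girth of a graph is the length of its shortest cycle ($+\infty$ if it is acyclic). The greedy algorithm on input $\langle G,k\rangle$ with a total ordering $\sigma=(e_1<\dots<e_m)$ of $E$: start with $H=(V,\emptyset)$; for $i=1,\dots,m$, with $e_i=(u,v)$, add $e_i$ to $H$ if $\mathrm{dist}_H(u,v)>k$ (current $H$), otherwise do nothing; output the final $H$. *)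

(* Defs.v *)
From mathcomp Require Import all_boot.
From Stdlib Require Import ClassicalEpsilon.
Set Implicit Arguments. Unset Strict Implicit. Unset Printing Implicit Defensive.

(* A simple undirected graph on the vertex set T (a finType, n = #|T|) is
   given by its edge set, a set of 2-element subsets of T. *)
Definition simple_edges (T : finType) (E : {set {set T}}) : Prop :=
  forall e, e \in E -> #|e| = 2.

Definition adj (T : finType) (F : {set {set T}}) : rel T :=
  fun x y => [set x; y] \in F.

(* dist_F(u,v) <= d : there is a walk from u to v with at most d edges of F.
   (dist_F(u,v) = +oo when no such walk exists for any d.) *)
Definition dist_le (T : finType) (F : {set {set T}}) (u v : T) (d : nat) : Prop :=
  exists p : seq T, [/\ path (adj F) u p, last u p = v & size p <= d].

(* H is a k-spanner of G=(T,E): dist_H(u,v) <= k * dist_G(u,v) for all u v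
   (vacuous when dist_G(u,v) = +oo). *)
Definition is_spanner (T : finType) (E H : {set {set T}}) (k : nat) : Prop :=
  H \subset E /\
  forall u v d, dist_le E u v d -> dist_le H u v (k * d).

(* girth(F) >= g : every cycle (closed walk through >= 3 pairwise distinct
   vertices) has length >= g. *)
Definition girth_ge (T : finType) (F : {set {set T}}) (g : nat) : Prop :=
  forall c : seq T, uniq c -> 3 <= size c -> cycle (adj F) c -> g <= size c.

Definition edge_within (T : finType) (F : {set {set T}}) (e : {set T}) (k : nat) : bool :=
  if excluded_middle_informative
       (exists u v, e = [set u; v] /\ dist_le F u v k)
  then true else false.

Definition greedy (T : finType) (k : nat) (s : seq {set T}) : {set {set T}} :=
  foldl (fun F e => if edge_within F e k then F else e |: F) set0 s.

(* Main.v *)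
Require Import Defs.
From mathcomp Require Import all_boot.
From Stdlib Require Import ClassicalEpsilon.
Set Implicit Arguments. Unset Strict Implicit.

Lemma dist_le_mono (T : finType) (F F' : {set {set T}}) u v d :
  F \subset F' -> dist_le F u v d -> dist_le F' u v d.
Proof.
move=> sFF' [p [hp hl hs]]; exists p; split=> //.
apply: sub_path hp => x y; rewrite /adj => h; exact: (subsetP sFF').
Qed.

Lemma no_short (T : finType) (F H : {set {set T}}) (k : nat) u v :
  F \subset H -> girth_ge H k.+2 -> u != v -> [set u; v] \notin F ->
  [set u; v] \in H -> dist_le F u v k -> False.
Proof.
move=> sFH gH nuv nF inH [p [hp hl hs]].
move: hl; case: (shortenP hp) => p' hp' hu hsub hl'.
have hsz : size p' <= k.
  apply: leq_trans hs; apply: uniq_leq_size => //; by case/andP: hu.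
have hge : 2 <= size p'.
  case: p' hp' hu hsub hl' hsz => [|a [|b q]] //=.
  - by move=> _ _ _ hvu; move: nuv; rewrite hvu eqxx.
  - by move=> /andP [hadj _] _ _ hva; move: nF; rewrite -hva; rewrite /adj in hadj; rewrite hadj.
have := gH (u :: p') hu _ _.
have -> : size (u :: p') = (size p').+1 by [].
move=> /(_ hge) h; have {}h : k.+2 <= (size p').+1.
  apply: h; rewrite /cycle rcons_path; apply/andP; split.
    apply: sub_path hp' => x y; rewrite /adj => h'; exact: (subsetP sFH).
  by rewrite hl' /adj setUC.
by move: (leq_trans h (hsz : (size p').+1 <= k.+1)); rewrite ltnn.
Qed.

Section Main.
Variables (T : finType) (E H : {set {set T}}) (k : nat).
Hypotheses (hE : simple_edges E) (sHE : H \subset E) (hsp : is_spanner E H k)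
  (gH : girth_ge H k.+2).

Let g := (fun (F : {set {set T}}) (e : {set T}) => if edge_within F e k then F else e |: F).

Lemma phase1 s (F : {set {set T}}) : F \subset H -> uniq s ->
  (forall x, x \in s -> x \in H /\ x \notin F) ->
  foldl g F s = F :|: [set x in s].
Proof.
elim: s F => [|a s IH] F sFH us hs /=.
  by apply/setP => y; rewrite !inE orbF.
have [aH aF] := hs a (mem_head _ _).
have -> : g F a = a |: F.
  rewrite /g /edge_within; case: excluded_middle_informative => // [[u [v [ea hd]]]].
  exfalso.
  have c2 : #|a| = 2 by apply: hE; exact: (subsetP sHE).
  have nuv : u != v by apply/negP => /eqP huv; move: c2; rewrite ea huv setUid cards1.
  have nF : [set u; v] \notin F by rewrite -ea.
  have iH : [set u; v] \in H by rewrite -ea.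

  exact: (no_short sFH gH nuv nF iH hd).
case/andP: us => nas us.
rewrite IH //.
- by apply/setP => y; rewrite !inE; case: (y == a); case: (y \in F); case: (y \in s).
- by rewrite subUset sub1set aH sFH.
- move=> x xs; have [xH xF] := hs x (mem_behead (s := a :: s) xs); split=> //.
  rewrite !inE negb_or xF andbT; apply/negP => /eqP xa; by move: nas; rewrite -xa xs.
Qed.

Lemma phase2 s : (forall x, x \in s -> x \in E) -> foldl g H s = H.
Proof.
elim: s => [|a s IH] hs //=.
have -> : g H a = H.
  rewrite /g /edge_within; case: excluded_middle_informative => // hn; exfalso.
  have aE := hs a (mem_head _ _).
  have /cards2P [u [v [nuv ea]]] : #|a| == 2 by rewrite hE.
  apply: hn; exists u, v; split=> //.
  have d1 : dist_le E u v 1 by exists [:: v]; split=> //=; rewrite /adj -ea aE.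
  by have := (proj2 hsp) _ _ _ d1; rewrite muln1.
by apply: IH => x xs; apply: hs; exact: (mem_behead (s := a :: s)).
Qed.

End Main.

Theorem proposition1p3 (T : finType) (E H : {set {set T}}) (k : nat) :
  simple_edges E -> 1 <= k ->
  H \subset E -> is_spanner E H k -> girth_ge H k.+2 ->
  exists s : seq {set T}, perm_eq s (enum E) /\ greedy k s = H.
Proof.
move=> hE _ sHE hsp gH.
exists (enum H ++ enum (E :\: H)); split.
  apply: uniq_perm; rewrite ?enum_uniq //.
    rewrite cat_uniq !enum_uniq /= andbT; apply/hasPn => x.
    by rewrite !mem_enum !inE => /andP [].
  move=> x; rewrite mem_cat !mem_enum !inE.
  by case xH: (x \in H) => //=; rewrite (subsetP sHE).
rewrite /greedy foldl_cat.
rewrite (phase1 hE sHE gH (sub0set _) (enum_uniq _)); last first.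
  by move=> x; rewrite mem_enum inE => ->.
have -> : set0 :|: [set x in enum H] = H.
  by apply/setP => y; rewrite !inE mem_enum.
apply: (phase2 hE hsp) => x; rewrite mem_enum !inE; by case/andP.
Qed.
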